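(* The category of pastures has arbitrary products: for any set $I$ and pastures $P_i$ ($i\in I$) there is a pasture $\prod_{i\in I}P_i$ with morphisms $\pi_j:\prod_{i\in I}P_i\to P_j$ ($j\in I$) such that for every pasture $P'$ and morphisms $f_i:P'\to P_i$ ($i\in I$) there is a unique morphism $f_*:P'\to\prod_{i\in I}P_i$ with $\pi_j\circ f_*=f_j$ for all $j\in I$.
   Context: A pasture is a multiplicative monoid $P$ with a zero element $0$ (absorbing: $0\cdot x=0$ for all $x$) such that $P^\times=P\setminus\{0\}$ is an abelian group under the multiplication, together with an involution $x\mapsto -x$ of $P$ fixing $0$, and a subset $N_P\subseteq P^3$ (the nullset; one writes $a+b+c=0$ to mean $(a,b,c)\in N_P$) such that: (1) $N_P$ is invariant under permutations of the three coordinates; (2) if $a+b+c=0$ then $da+db+dc=0$ for every $d\in P$; (3) $a+b+0=0$ if and only if $a=-b$. A morphism of pastures $f:P_1\to P_2$ is a multiplicative map with $f(0)=0$, $f(1)=1$, $f(-a)=-f(a)$ for all $a$, and such that $f(a)+f(b)+f(c)=0$ in $N_{P_2}$ whenever $a+b+c=0$ in $N_{P_1}$. *)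

(* Defs.v *)
Record pasture := Pasture {
  pcar :> Type;
  pzero : pcar;
  pone : pcar;
  pmul : pcar -> pcar -> pcar;
  pneg : pcar -> pcar;
  pnull : pcar -> pcar -> pcar -> Prop;
  pmulA : forall x y z, pmul x (pmul y z) = pmul (pmul x y) z;
  pmul1l : forall x, pmul pone x = x;
  pmul1r : forall x, pmul x pone = x;
  pmul0l : forall x, pmul pzero x = pzero;
  pmul0r : forall x, pmul x pzero = pzero;
  (* P^x = P \ {0} is an abelian group under multiplication *)
  pone_neq0 : pone <> pzero;
  pmul_neq0 : forall x y, x <> pzero -> y <> pzero -> pmul x y <> pzero;
  pmulC_units : forall x y, x <> pzero -> y <> pzero -> pmul x y = pmul y x;
  pinv_ex : forall x, x <> pzero -> exists y, y <> pzero /\ pmul x y = pone;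
  pnegK : forall x, pneg (pneg x) = x;
  pneg0 : pneg pzero = pzero;
  pnull_perm : forall a b c, pnull a b c ->
     pnull a c b /\ pnull b a c /\ pnull b c a /\ pnull c a b /\ pnull c b a;
  pnull_mul : forall a b c d, pnull a b c -> pnull (pmul d a) (pmul d b) (pmul d c);
  pnull_zero : forall a b, pnull a b pzero <-> a = pneg b
}.

Arguments pzero {p}.
Arguments pone {p}.
Arguments pmul {p}.
Arguments pneg {p}.
Arguments pnull {p}.

Definition is_pasture_morphism (P1 P2 : pasture) (f : P1 -> P2) : Prop :=
  (forall a b, f (pmul a b) = pmul (f a) (f b)) /\
  f pzero = pzero /\
  f pone = pone /\
  (forall a, f (pneg a) = pneg (f a)) /\
  (forall a b c, pnull a b c -> pnull (f a) (f b) (f c)).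

(* Main.v *)
Require Import Defs.
From Stdlib Require Import Classical ClassicalEpsilon FunctionalExtensionality ProofIrrelevance.

Lemma pneg_neq0 (R : pasture) (x : R) : x <> pzero -> pneg x <> pzero.
Proof. intros H E. apply H. rewrite <- (pnegK R x), E. apply pneg0. Qed.

Lemma pmul_eq0 (R : pasture) (a b : R) : pmul a b = pzero <-> a = pzero \/ b = pzero.
Proof.
  split.
  - intro E. destruct (classic (a = pzero)); auto. destruct (classic (b = pzero)); auto.
    exfalso; exact (pmul_neq0 R a b H H0 E).
  - intros [->| ->]; [apply pmul0l | apply pmul0r].
Qed.

Lemma pneg_eq0 (R : pasture) (a : R) : pneg a = pzero <-> a = pzero.
Proof.
  split; intro E.
  - destruct (classic (a = pzero)); auto. exfalso; exact (pneg_neq0 R a H E).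
  - subst; apply pneg0.
Qed.

Lemma morph_nz (P1 P2 : pasture) f : is_pasture_morphism P1 P2 f ->
  forall x, x <> pzero -> f x <> pzero.
Proof.
  intros (Hm&H0&H1&_&_) x hx E. destruct (pinv_ex _ x hx) as [y [_ hy]].
  apply (pone_neq0 P2). rewrite <- H1, <- hy, Hm, E. apply pmul0l.
Qed.

Lemma null00 (R : pasture) (a b c : R) : pnull a b c ->
  (a = pzero -> b = pzero -> c = pzero) /\ (a = pzero -> c = pzero -> b = pzero) /\
  (b = pzero -> c = pzero -> a = pzero).
Proof.
  intro H. destruct (pnull_perm _ _ _ _ H) as (H1&H2&H3&H4&H5).
  repeat split; intros E1 E2; subst.
  - apply pnull_zero in H4. rewrite H4; apply pneg0.
  - apply pnull_zero in H2. rewrite H2; apply pneg0.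
  - apply pnull_zero in H. rewrite H; apply pneg0.
Qed.

Section Prod.
Variable I : Type.
Variable P : I -> pasture.

Definition U := {u : forall i, P i | forall i, u i <> pzero}.
Definition Qc := option U.

Lemma U_eq (u v : U) : (forall i, proj1_sig u i = proj1_sig v i) -> u = v.
Proof.
  destruct u as [u hu], v as [v hv]; simpl; intro H.
  assert (u = v) by (apply functional_extensionality_dep; exact H). subst.
  f_equal. apply proof_irrelevance.
Qed.

Definition prj (a : Qc) (i : I) : P i :=
  match a with None => pzero | Some u => proj1_sig u i end.

Lemma prj_inj a b : (a = None <-> b = None) -> (forall i, prj a i = prj b i) -> a = b.
Proof.
  destruct a as [u|], b as [v|]; simpl; intros H1 H2.
  - f_equal; apply U_eq; auto.
  - assert (Some u = None) by (apply H1; reflexivity); discriminate.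
  - assert (Some v = None) by (apply H1; reflexivity); discriminate.
  - reflexivity.
Qed.

Definition Umul (u v : U) : U :=
  exist (fun u : forall i, P i => forall i, u i <> pzero) (fun i => pmul (proj1_sig u i) (proj1_sig v i))
    (fun i => pmul_neq0 _ _ _ (proj2_sig u i) (proj2_sig v i)).

Definition qmul (a b : Qc) : Qc :=
  match a, b with Some u, Some v => Some (Umul u v) | _, _ => None end.
Definition qone : Qc := Some (exist (fun u : forall i, P i => forall i, u i <> pzero) (fun i => pone) (fun i => pone_neq0 (P i))).
Definition qneg (a : Qc) : Qc :=
  match a with None => None
  | Some u => Some (exist (fun u : forall i, P i => forall i, u i <> pzero) (fun i => pneg (proj1_sig u i)) (fun i => pneg_neq0 _ _ (proj2_sig u i))) end.
Definition kcond (a b c : Qc) : Prop :=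
  (a = None -> b = None -> c = None) /\ (a = None -> c = None -> b = None) /\
  (b = None -> c = None -> a = None).
Definition qnull a b c := (forall i, pnull (prj a i) (prj b i) (prj c i)) /\ kcond a b c.

Lemma prj_mul a b i : prj (qmul a b) i = pmul (prj a i) (prj b i).
Proof. destruct a, b; simpl; try reflexivity; rewrite ?pmul0l, ?pmul0r; reflexivity. Qed.
Lemma prj_neg a i : prj (qneg a) i = pneg (prj a i).
Proof. destruct a; simpl; [reflexivity | symmetry; apply pneg0]. Qed.

Lemma qmul_None a b : qmul a b = None <-> a = None \/ b = None.
Proof. destruct a, b; simpl; intuition discriminate. Qed.
Lemma qneg_None a : qneg a = None <-> a = None.
Proof. destruct a; simpl; intuition discriminate. Qed.

Definition Q : pasture.
Proof.
  refine (Pasture Qc None qone qmul qneg qnull _ _ _ _ _ _ _ _ _ _ _ _ _ _).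
  - intros [x|] [y|] [z|]; simpl; try reflexivity.
    f_equal; apply U_eq; intro i; simpl; apply pmulA.
  - intros [x|]; simpl; try reflexivity; f_equal; apply U_eq; intro; simpl; apply pmul1l.
  - intros [x|]; simpl; try reflexivity; f_equal; apply U_eq; intro; simpl; apply pmul1r.
  - intros; reflexivity.
  - intros [x|]; reflexivity.
  - discriminate.
  - intros [x|] [y|] hx hy; simpl; try discriminate; congruence.
  - intros [x|] [y|] hx hy; try congruence; simpl.
    f_equal; apply U_eq; intro i; simpl; apply pmulC_units; [apply (proj2_sig x) | apply (proj2_sig y)].
  - intros [x|] hx; [|congruence].
    set (h := fun i => constructive_indefinite_description _
                 (pinv_ex (P i) (proj1_sig x i) (proj2_sig x i))).
    exists (Some (exist (fun u : forall i, P i => forall i, u i <> pzero) (fun i => proj1_sig (h i)) (fun i => proj1 (proj2_sig (h i))))).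
    split; [discriminate|]. unfold qmul, qone; f_equal; apply U_eq; intro i.
    exact (proj2 (proj2_sig (h i))).
  - intros [x|]; simpl; [f_equal; apply U_eq; intro; simpl; apply pnegK | reflexivity].
  - reflexivity.
  - intros a b c [H [K1 [K2 K3]]]. unfold qnull, kcond; repeat split;
    try (intro i; destruct (pnull_perm _ _ _ _ (H i)) as (?&?&?&?&?); assumption);
    intros; auto.
  - intros a b c d [H K]. split.
    + intro i; rewrite !prj_mul; apply pnull_mul; apply H.
    + unfold kcond in *. rewrite !qmul_None. intuition.
  - intros a b. split.
    + intros [H [K1 [K2 K3]]]. apply prj_inj.
      * rewrite qneg_None. split; intro E; [apply K2|apply K3]; auto.
      * intro i; rewrite prj_neg. apply (proj1 (pnull_zero _ _ _) (H i)).
    + intros ->. split.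
      * intro i. apply (proj2 (pnull_zero _ _ _)). apply prj_neg.
      * unfold kcond. rewrite qneg_None. intuition.
Defined.

Lemma pi_morph j : is_pasture_morphism Q (P j) (fun x => prj x j).
Proof.
  repeat split.
  - intros a b; exact (prj_mul a b j).
  - intros a; exact (prj_neg a j).
  - intros a b c [H _]; apply H.
Qed.

Section Univ.
Variable P' : pasture.
Variable f : forall i, P' -> P i.
Hypothesis Hf : forall i, is_pasture_morphism P' (P i) (f i).

Definition fst' (x : P') : Qc :=
  match excluded_middle_informative (x = pzero) with
  | left _ => None
  | right h => Some (exist (fun u : forall i, P i => forall i, u i <> pzero) (fun i => f i x) (fun i => morph_nz _ _ _ (Hf i) x h))
  end.

Lemma prj_fst i x : prj (fst' x) i = f i x.
Proof.
  unfold fst'; destruct excluded_middle_informative; simpl; [|reflexivity].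
  subst; symmetry; apply (Hf i).
Qed.

Lemma fst_None x : fst' x = None <-> x = pzero.
Proof. unfold fst'; destruct excluded_middle_informative; split; intro; solve [auto | discriminate | contradiction]. Qed.

Lemma fst_morph : is_pasture_morphism P' Q fst'.
Proof.
  split; [|split; [|split; [|split]]].
  - intros a b. apply prj_inj.
    + change (fst' (pmul a b) = None <-> qmul (fst' a) (fst' b) = None).
      rewrite qmul_None, !fst_None, pmul_eq0. tauto.
    + intro i. change (prj (fst' (pmul a b)) i = prj (qmul (fst' a) (fst' b)) i).
      rewrite prj_mul, !prj_fst. apply (Hf i).
  - apply fst_None; reflexivity.
  - apply prj_inj.
    + rewrite fst_None. split; intro E; [exfalso; exact (pone_neq0 _ E) | discriminate].
    + intro i. rewrite prj_fst. apply (Hf i).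
  - intros a. apply prj_inj.
    + change (fst' (pneg a) = None <-> qneg (fst' a) = None).
      rewrite qneg_None, !fst_None, pneg_eq0. tauto.
    + intro i. change (prj (fst' (pneg a)) i = prj (qneg (fst' a)) i).
      rewrite prj_neg, !prj_fst. apply (Hf i).
  - intros a b c H. split.
    + intro i. rewrite !prj_fst. apply (Hf i); exact H.
    + unfold kcond. rewrite !fst_None. apply null00; exact H.
Qed.

Lemma fst_unique (g : P' -> Q) : is_pasture_morphism P' Q g ->
  (forall j x, prj (g x) j = f j x) -> forall x, g x = fst' x.
Proof.
  intros Hg Hp x. apply prj_inj.
  - rewrite fst_None. split; intro E.
    + destruct (classic (x = pzero)); auto. exfalso; exact (morph_nz _ _ _ Hg x H E).
    + subst. apply Hg.
  - intro i; rewrite Hp, prj_fst; reflexivity.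
Qed.
End Univ.
End Prod.

Theorem theorem6p5 (I : Type) (P : I -> pasture) :
  exists (Q : pasture) (pi : forall j : I, Q -> P j),
    (forall j, is_pasture_morphism Q (P j) (pi j)) /\
    forall (P' : pasture) (f : forall i : I, P' -> P i),
      (forall i, is_pasture_morphism P' (P i) (f i)) ->
      exists fstar : P' -> Q,
        is_pasture_morphism P' Q fstar /\
        (forall j x, pi j (fstar x) = f j x) /\
        (forall g : P' -> Q, is_pasture_morphism P' Q g ->
           (forall j x, pi j (g x) = f j x) -> forall x, g x = fstar x).
Proof.
  exists (Q I P), (fun j x => prj I P x j). split.
  - apply pi_morph.
  - intros P' f Hf. exists (fst' I P P' f Hf). split; [apply fst_morph|split].
    + intros; apply prj_fst.
    + apply fst_unique.
Qed.
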